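(* Let $X$ be a real normed linear space. Then $$\sup_{f\in S_{X^*}}\operatorname{diam} M_f^+=\mathcal{R}(X),$$ where $M_f^+=\{x\in S_X: f(x)=\|f\|\}$ and $\mathcal{R}(X)=\sup\{\|x-y\|:\ \overline{xy}\subset S_X\}$.
   Context: $S_X$, $S_{X^*}$ are the unit spheres of $X$ and its dual. $\overline{xy}=\{(1-t)x+ty:t\in[0,1]\}$ is the closed segment joining $x$ and $y$. $\operatorname{diam}A=\sup_{a,b\in A}\|a-b\|$. *)

(* Defs.v *)
From HB Require Import structures.
From mathcomp Require Import all_boot all_order all_algebra.
From mathcomp Require Import all_classical all_reals all_analysis.
Unset Printing Implicit Defensive.
Import Order.TTheory GRing.Theory Num.Theory.
Import numFieldNormedType.Exports.
Local Open Scope classical_set_scope.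
Local Open Scope ring_scope.

Definition unit_sphere (R : realType) (X : normedModType R) : set X :=
  [set x | `|x| = 1].
Arguments unit_sphere {R} X.

Definition segment (R : realType) (X : normedModType R) (x y : X) : set X :=
  [set (1 - t) *: x + t *: y | t in `[0, 1]%classic].

(* diam A = sup_{a,b in A} ||a - b|| (extended-real; diam of the empty set is -oo). *)
Definition diam (R : realType) (X : normedModType R) (A : set X) : \bar R :=
  ereal_sup [set (`|a - b|)%:E | a in A & b in A].

Definition fnorm (R : realType) (X : normedModType R) (f : X -> R) : \bar R :=
  ereal_sup [set (`|f x|)%:E | x in [set x : X | `|x| <= 1]].

Definition dual_elt (R : realType) (X : normedModType R) (f : X -> R) : Prop :=
  linear (f : X -> R^o) /\ continuous f.

Arguments segment {R X}. Arguments diam {R X}. Arguments fnorm {R X}. Arguments dual_elt {R X}.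

Definition dual_sphere (R : realType) (X : normedModType R) : set (X -> R) :=
  [set f | dual_elt f /\ fnorm f = 1%E].
Arguments dual_sphere {R} X.

Definition Mplus (R : realType) (X : normedModType R) (f : X -> R) : set X :=
  [set x | unit_sphere X x /\ (f x)%:E = fnorm f].

Arguments Mplus {R X}.

Definition calR (R : realType) (X : normedModType R) : \bar R :=
  ereal_sup [set r : \bar R | exists x y : X,
     segment x y `<=` unit_sphere X /\ r = (`|x - y|)%:E].
Arguments calR {R} X.

(* Main.v *)
Require Import Defs.
From HB Require Import structures.
From mathcomp Require Import all_boot all_order all_algebra.
From mathcomp Require Import all_classical all_reals all_analysis.
From mathcomp Require Import lra.
Import Order.TTheory GRing.Theory Num.Theory.
Import numFieldNormedType.Exports.
Local Open Scope classical_set_scope.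
Local Open Scope ring_scope.

Section HBsec.
Variables (R : realType) (X : normedModType R).

Definition good (G : set (X * R)) :=
  [/\ (forall a b, G a -> G b -> G (a.1 + b.1, a.2 + b.2)),
      (forall k a, G a -> G (k *: a.1, k * a.2)) &
      (forall a, G a -> a.2 <= `|a.1|)].

Lemma good_fun G x r s : good G -> G (x, r) -> G (x, s) -> r = s.
Proof.
move=> [GD GZ Gn] Gr Gs.
have H1 := Gn _ (GD _ _ Gr (GZ (-1) _ Gs)).
have H2 := Gn _ (GD _ _ Gs (GZ (-1) _ Gr)).
move: H1 H2 => /=; rewrite !scaleN1r !subrr normr0 !mulN1r !subr_le0 => H1 H2.
by apply/le_anti; rewrite H1 H2.
Qed.

Lemma norm_scale_pos (k : R) (v : X) : 0 < k -> `|k *: v| = k * `|v|.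
Proof. by move=> k0; rewrite normrZ gtr0_norm. Qed.

Lemma extend_norm (m : X) : `|m| = 1 ->
  exists A : set (X * R), good A /\ A (m, 1) /\ forall z, exists r, A (z, r).
Proof.
move=> m1.
pose Pm (G : set (X * R)) := good G /\ (forall a, G a -> G (m, 1)).
have [A [[[AD AZ An] Am] Amax]] : exists A, Pm A /\ forall B, A `<` B -> ~ Pm B.
  apply: Zorn_bigcup => F FP Ftot; split; last first.
    by move=> a [G FG Ga]; exists G => //; exact: (FP G FG).2 Ga.
  split.
  - move=> a b [G1 F1 a1] [G2 F2 b2].
    have [S12|S21] := Ftot _ _ F1 F2.
    + have [[D _ _] _] := FP G2 F2.
      by exists G2 => //; apply: D; [exact: S12|].
    + have [[D _ _] _] := FP G1 F1.
      by exists G1 => //; apply: D; [|exact: S21].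
  - move=> k a [G FG Ga]; have [[_ Z _] _] := FP G FG.
    by exists G => //; apply: Z.
  - by move=> a [G FG Ga]; have [[_ _ N] _] := FP G FG; apply: N.
have A0 : exists a, A a.
  apply: contrapT => nA.
  pose L0 := [set a : X * R | exists t, a = (t *: m, t)].
  apply: (Amax L0).
    split; first by move=> a Aa; case: nA; exists a.
    by move=> H; apply: nA; exists (1 *: m, 1); apply: H; exists 1.
  split; last by move=> _ _; exists 1; rewrite scale1r.
  split.
  - by move=> _ _ [t ->] [s ->]; exists (t + s); rewrite /= scalerDl.
  - by move=> k _ [t ->]; exists (k * t); rewrite /= scalerA.
  - move=> _ [t ->] /=; rewrite normrZ m1 mulr1; exact: ler_norm.
have Am1 : A (m, 1) by case: A0 => a /Am.
have A00 : A (0, 0).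
  by have := AZ 0 _ Am1; rewrite scale0r mul0r.
have good_A : good A by [].
exists A; split => //; split => // z.
apply: contrapT => nz.
pose S := [set a.2 - `|a.1 - z| | a in A].
have key a b : A a -> A b -> a.2 - `|a.1 - z| <= `|b.1 + z| - b.2.
  move=> Aa Ab; have := An _ (AD _ _ Aa Ab) => /= H.
  rewrite lerBrDr addrAC lerBlDr; apply: (le_trans H).
  have := ler_normD (a.1 - z) (z + b.1); rewrite addrA subrK => h.
  by apply: (le_trans h); rewrite (addrC `|a.1 - z|) (addrC z).
have S0 : S !=set0 by exists (1 - `|m - z|); exists (m, 1).
have Sub : has_ubound S.
  by exists (`|m + z| - 1) => _ [a Aa <-]; exact: (key a (m, 1)).
pose c := sup S.
have cge a : A a -> a.2 - `|a.1 - z| <= c.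
  by move=> Aa; apply: ub_le_sup => //; exists a.
have cle b : A b -> c <= `|b.1 + z| - b.2.
  by move=> Ab; apply: ge_sup => // _ [a Aa <-]; exact: key.
pose B := [set p : X * R | exists a t, A a /\ p = (a.1 + t *: z, a.2 + t * c)].
apply: (Amax B).
  split.
    move=> [x r] Axr; exists (x, r), 0; split => //.
    by rewrite /= scale0r mul0r !addr0.
  move=> BA; apply: nz; exists c.
  apply: BA; exists (0, 0), 1; split => //.
  by rewrite /= scale1r mul1r !add0r.
split; last first.
  move=> _ _; exists (m, 1), 0; split => //.
  by rewrite /= scale0r mul0r !addr0.
split.
- move=> _ _ [a [t [Aa ->]]] [b [s [Ab ->]]].
  exists (a.1 + b.1, a.2 + b.2), (t + s); split; first exact: AD.
  by rewrite /= scalerDl mulrDl addrACA [a.2 + _ + _]addrACA.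
- move=> k _ [a [t [Aa ->]]].
  exists (k *: a.1, k * a.2), (k * t); split; first exact: AZ.
  by rewrite /= scalerDr mulrDr scalerA mulrA.
- move=> _ [a [t [Aa ->]]] /=.
  have [t0|t0|->] := ltgtP t 0; last by rewrite scale0r mul0r !addr0; exact: An.
  +
    pose u := - t.
    have u0 : 0 < u by rewrite oppr_gt0.
    have := cge _ (AZ u^-1 _ Aa) => /=.
    move=> H.
    have H' : a.2 - `|a.1 - u *: z| <= u * c.
      have : u * (u^-1 * a.2 - `|u^-1 *: a.1 - z|) <= u * c.
        by rewrite ler_pM2l.
      rewrite mulrBr mulrA mulfV ?gt_eqF // mul1r -norm_scale_pos //.
      by rewrite scalerBr scalerA mulfV ?gt_eqF // scale1r.
    move: H'; rewrite /u scaleNr opprK mulNr.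
    by rewrite lerBlDr -lerBlDl opprK addrC.
  + have := cle _ (AZ t^-1 _ Aa) => /= H.
    have H' : t * c <= `|a.1 + t *: z| - a.2.
      have : t * c <= t * (`|t^-1 *: a.1 + z| - t^-1 * a.2).
        by rewrite ler_pM2l.
      rewrite mulrBr mulrA mulfV ?gt_eqF // mul1r -norm_scale_pos //.
      by rewrite scalerDr scalerA mulfV ?gt_eqF // scale1r.
    by rewrite addrC -lerBrDr.
Qed.


Lemma lin_props (f : X -> R) : linear (f : X -> R^o) ->
  (forall u v, f (u + v) = f u + f v) /\ (forall a u, f (a *: u) = a * f u).
Proof.
move=> lf.
have f0 : f 0 = 0.
  have := lf 1 0 0; rewrite scale1r addr0 => /eqP.
  by rewrite -subr_eq0 /GRing.scale /= mul1r opprD addrA subrr add0r oppr_eq0 => /eqP.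
split.
  by move=> u v; have := lf 1 u v; rewrite scale1r => ->; rewrite /GRing.scale /= mul1r.
by move=> a u; have := lf a u 0; rewrite !addr0 f0 addr0.
Qed.

Lemma dual_bound (f : X -> R) : dual_sphere X f -> forall x, `|f x| <= `|x|.
Proof.
move=> [[lf _] fn] x.
have [fD fZ] := lin_props _ lf.
have [->|x0] := eqVneq x 0.
  by have := fZ 0 0; rewrite scale0r mul0r => ->; rewrite normr0.
have nx : 0 < `|x| by rewrite normr_gt0.
have : ((`|f (`|x|^-1 *: x)|)%:E <= fnorm f)%E.
  apply: ereal_sup_ubound; exists (`|x|^-1 *: x) => //=.
  by rewrite normrZ normrV ?unitfE ?gt_eqF // normr_id mulVf ?gt_eqF.
rewrite fn lee_fin fZ normrM normrV ?unitfE ?gt_eqF // normr_id.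
by rewrite ler_pdivrMl // mulr1.
Qed.

Lemma norming (m : X) : `|m| = 1 -> exists f, dual_sphere X f /\ f m = 1.
Proof.
move=> m1.
have [A [[AD AZ An] [Am fullA]]] := @extend_norm m m1.
have gA : good A by [].
pose f x := xget 0 [set r | A (x, r)].
have fA x : A (x, f x) by rewrite /f; exact: (xgetPex 0 (fullA x)).
have fD u v : f (u + v) = f u + f v.
  by apply: (good_fun _ _ _ _ gA (fA _)); exact: (AD _ _ (fA u) (fA v)).
have fZ a u : f (a *: u) = a * f u.
  by apply: (good_fun _ _ _ _ gA (fA _)); exact: (AZ a _ (fA u)).
have fb x : `|f x| <= `|x|.
  rewrite ler_norml (An _ (fA x)) andbT lerNl.
  by have := An _ (AZ (-1) _ (fA x)); rewrite /= scaleN1r normrN mulN1r.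
have fm : f m = 1 by apply: (good_fun _ _ _ _ gA (fA _)).
exists f; split => //; split; first split.
- by move=> a u v; rewrite fD fZ.
- move=> x; apply/cvgrPdist_lt => e e0.
  have := (@cvgrPdist_lt _ _ _ (nbhs x) _ id x).1 (@cvg_id _ (nbhs x)) e e0.
  move=> /(_ (@nbhs_filter _ x)) H0.
  apply: filterS H0 => t /= H.
  have -> : f x - f t = f (x - t).
    by have := fD (x - t) t; rewrite subrK => {1}->; rewrite addrK.
  exact: le_lt_trans (fb _) H.
- apply/le_anti/andP; split.
    apply: ge_ereal_sup => _ [x /= x1 <-]; rewrite lee_fin.
    exact: le_trans (fb x) x1.
  by apply: ereal_sup_ubound; exists m; rewrite /= ?m1 // fm normr1.
Qed.

End HBsec.
Arguments lin_props {R X f}. Arguments dual_bound {R X f}. Arguments norming {R X m}.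

Theorem theorem2p9 (R : realType) (X : normedModType R) :
  ereal_sup [set diam (Mplus f) | f in dual_sphere X] = calR X.
Proof.
apply/le_anti/andP; split.
- apply: ge_ereal_sup => _ [f fS <-].
  apply: ge_ereal_sup => _ [a [a1 fa] [b [b1 fb] <-]].
  have [[lf _] fn] := fS.
  have [fD fZ] := lin_props lf.
  rewrite fn in fa fb; case: fa => fa; case: fb => fb.
  apply: ereal_sup_ubound; exists a, b; split => //.
  move=> _ [t t01 <-]; move: t01; rewrite /= in_itv /= => /andP[t0 t1].
  rewrite /unit_sphere /=.
  apply/le_anti/andP; split.
    apply: le_trans (ler_normD _ _) _.
    rewrite !normrZ a1 b1 !mulr1 ger0_norm ?subr_ge0 // ger0_norm //.
    by rewrite subrK.
  have := dual_bound fS ((1 - t) *: a + t *: b).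
  rewrite fD !fZ fa fb !mulr1 subrK ger0_norm //.
- apply: ge_ereal_sup => _ [x [y [seg ->]]].
  have sx : `|x| = 1.
    by apply: (seg x); exists 0; rewrite /= ?in_itv /= ?lexx ?ler01 // subr0 scale1r scale0r addr0.
  have sy : `|y| = 1.
    by apply: (seg y); exists 1; rewrite /= ?in_itv /= ?lexx ?ler01 // subrr scale1r scale0r add0r.
  pose h : R := 2^-1.
  have h01 : `[0, 1]%classic h.
    by rewrite /= in_itv /= invr_ge0 ler0n /= invf_le1 ?ler1n // ltr0n.
  have sm : `|(1 - h) *: x + h *: y| = 1 by apply: seg; exists h.
  have [f [fS fm]] := norming sm.
  have [[lf _] fn] := fS.
  have [fD fZ] := lin_props lf.
  have bx := dual_bound fS x; have by_ := dual_bound fS y.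
  rewrite sx in bx; rewrite sy in by_.
  move: bx by_; rewrite !ler_norml => /andP[_ bx] /andP[_ by_].
  move: fm; rewrite fD !fZ => fm.
  have h2 : h * 2 = 1 by rewrite /h mulVf // pnatr_eq0.
  have fx : f x = 1 by nra.
  have fy : f y = 1 by nra.
  have Mx : Mplus f x by split => //; rewrite fx fn.
  have My : Mplus f y by split => //; rewrite fy fn.
  apply: (@le_trans _ _ (diam (Mplus f))).
    by apply: ereal_sup_ubound; exists x => //; exists y.
  by apply: ereal_sup_ubound; exists f.
Qed.
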